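(* A simply laced (unitary) quiver admits a single unique Coulomb branch: the Coulomb branch computed by the monopole formula does not depend on the choice of node at which the residual center-of-mass $U(1)$ is ungauged.
   Context: Consider a $3d~\mathcal N=4$ quiver gauge theory whose quiver consists solely of unitary gauge nodes $U(N_i)$ (no flavor nodes). To compute its Coulomb branch via the monopole formula (Hilbert series), one must ungauge (decouple) a residual center-of-mass $U(1)$ symmetry, which is done by choosing a node and setting one of the magnetic charges at that node to zero (introducing a delta function on one component of the magnetic flux there); this choice is called the ungauging scheme. In the conformal dimension, the hypermultiplet contribution of an edge between nodes with magnetic fluxes $m^{(1)}, m^{(2)}$ is $\frac12\sum_{j,k}|\lambda m^{(1)}_j - m^{(2)}_k|$, with $\lambda=1$ for simply laced edges. A quiver is simply laced if all its edges are single edges (multiplicity $1$). *)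

(* Defs.v *)
From HB Require Import structures.
From mathcomp Require Import all_boot all_order all_algebra.
From mathcomp Require Import all_classical all_reals.
From mathcomp Require Import ereal esum exp.
Set Implicit Arguments. Unset Strict Implicit. Unset Printing Implicit Defensive.
Import Order.TTheory GRing.Theory Num.Theory.
Local Open Scope ring_scope.

(* A simply laced unitary quiver without flavour nodes is given by
   - a finite type of gauge nodes I,
   - ranks N : I -> nat (node i carries U(N i)),
   - an adjacency relation adj : rel I, assumed symmetric and irreflexive
     (every edge is a single, simply laced edge, lambda = 1).

   Magnetic charges: one integer per gauge component, i.e. per element of
   the finite type  gauge_comp N = {i : I & 'I_(N i)} ;  (Tagged _ j) is the j-th
   component of the flux m^(i) at node i. *)

Definition gauge_comp (I : finType) (N : I -> nat) : finType := {i : I & 'I_(N i)}.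

Definition flux (I : finType) (N : I -> nat) (m : {ffun gauge_comp N -> int})
  (i : I) (j : 'I_(N i)) : int :=
  m (Tagged (fun i => 'I_(N i)) j).
Arguments flux {I N} m i j.

Definition weyl_chamber (I : finType) (N : I -> nat) (m : {ffun gauge_comp N -> int})
  : Prop :=
  forall (i : I) (j k : 'I_(N i)), (j <= k)%N -> flux m i k <= flux m i j.

(* The sum over unordered edges {a,b} is written as 1/2 of the sum over
   ordered pairs (a,b) with adj a b (adj symmetric, irreflexive). *)
Definition conf_dim (R : realType) (I : finType) (N : I -> nat) (adj : rel I)
  (m : {ffun gauge_comp N -> int}) : R :=
  - (\sum_(i : I) \sum_(j : 'I_(N i)) \sum_(k : 'I_(N i) | (j < k)%N)
        (`|flux m i j - flux m i k|)%:~R)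
  + 2^-1 * (2^-1 * \sum_(a : I) \sum_(b : I | adj a b)
        \sum_(j : 'I_(N a)) \sum_(k : 'I_(N b))
           (`|flux m a j - flux m b k|)%:~R).

(* Dressing factor of U(N) at node i: the residual gauge group is
   prod_blocks U(lambda_b), lambda_b the multiplicity of each distinct flux
   value, and P_{U(lambda)}(t) = prod_{l=1}^{lambda} 1/(1 - t^(2l)). *)
Definition dressing (R : realType) (I : finType) (N : I -> nat)
  (m : {ffun gauge_comp N -> int}) (t : R) : R :=
  \prod_(i : I)
    let vals := [seq flux m i j | j <- enum 'I_(N i)] in
    \prod_(v <- undup vals)
      \prod_(1 <= l < (count_mem v vals).+1) (1 - t ^+ (2 * l))^-1.

(* Monopole formula with ungauging scheme v0 = (node i0, component j0):
   HS(t) = sum_{m in Weyl chamber, m^(i0)_(j0) = 0} t^(2 Delta(m)) P(t;m),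
   evaluated at a real 0 < t < 1 as a (possibly infinite) sum of
   non-negative terms in the extended reals. *)
Definition hilbert_series (R : realType) (I : finType) (N : I -> nat)
  (adj : rel I) (v0 : gauge_comp N) (t : R) : \bar R :=
  esum [set m : {ffun gauge_comp N -> int} | weyl_chamber m /\ m v0 = 0]
       (fun m => ((t `^ (2 * @conf_dim R I N adj m)) * @dressing R I N m t)%:E).

(* Main.v *)
Require Import Defs.
From HB Require Import structures.
From mathcomp Require Import all_boot all_order all_algebra.
From mathcomp Require Import all_classical all_reals.
From mathcomp Require Import ereal esum exp.
Import Order.TTheory GRing.Theory Num.Theory.
Local Open Scope ring_scope.

Definition shiftm (I : finType) (N : I -> nat) (m : {ffun gauge_comp N -> int}) (c : int)
  : {ffun gauge_comp N -> int} := [ffun x => m x + c].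
Arguments shiftm {I N}.

Lemma flux_shift (I : finType) (N : I -> nat) m c i j :
  flux (@shiftm I N m c) i j = flux m i j + c.
Proof. by rewrite /flux /shiftm ffunE. Qed.

Lemma weyl_shift (I : finType) (N : I -> nat) m c :
  weyl_chamber (@shiftm I N m c) <-> weyl_chamber m.
Proof.
split=> H i j k jk; have := H i j k jk; by rewrite ?flux_shift ?lerD2r.
Qed.

Lemma conf_shift (R : realType) (I : finType) (N : I -> nat) adj m c :
  @conf_dim R I N adj (shiftm m c) = @conf_dim R I N adj m.
Proof.
rewrite /conf_dim; congr (- _ + 2^-1 * (2^-1 * _)).
  apply: eq_bigr => i _; apply: eq_bigr => j _; apply: eq_bigr => k _.
  by rewrite !flux_shift opprD addrACA subrr addr0.
apply: eq_bigr => i _; apply: eq_bigr => b _; apply: eq_bigr => j _; apply: eq_bigr => k _.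
by rewrite !flux_shift opprD addrACA subrr addr0.
Qed.

Lemma dress_shift (R : realType) (I : finType) (N : I -> nat) m c t :
  @dressing R I N (shiftm m c) t = @dressing R I N m t.
Proof.
rewrite /dressing; apply: eq_bigr => i _ /=.
have inj : injective (fun x : int => x + c) by move=> x y /addIr.
have -> : [seq flux (shiftm m c) i j | j <- enum 'I_(N i)] =
          map (fun x => x + c) [seq flux m i j | j <- enum 'I_(N i)].
  by elim: (enum _) => //= j s ->; rewrite flux_shift.
have Hc : forall v (s : seq int), count_mem (v + c) (map (fun x => x + c) s) = count_mem v s.
  by move=> v; elim=> //= x s ->; rewrite (inj_eq inj).
rewrite (undup_map_inj inj) big_map; apply: eq_bigr => v _.
by rewrite Hc.
Qed.

Theorem claim2 (R : realType) (I : finType) (N : I -> nat) (adj : rel I)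
  (adj_sym : symmetric adj) (adj_irr : irreflexive adj)
  (v1 v2 : gauge_comp N) (t : R) :
  0 < t < 1 ->
  @hilbert_series R I N adj v1 t = hilbert_series adj v2 t.
Proof.
move=> _; rewrite /hilbert_series.
rewrite (@reindex_esum R _ _
  [set m : {ffun gauge_comp N -> int} | weyl_chamber m /\ m v1 = 0]
  [set m : {ffun gauge_comp N -> int} | weyl_chamber m /\ m v2 = 0]
  (fun m => shiftm m (- m v2))).
  by apply: eq_esum => m _; rewrite conf_shift dress_shift.
split.
- move=> m [W _]; split; first by apply/weyl_shift.
  by rewrite /shiftm ffunE subrr.
- move=> m1 m2 /set_mem[_ h1] /set_mem[_ h2] /= E.
  have E1 := congr1 (fun f : {ffun _ -> int} => f v1) E.
  rewrite /= /shiftm !ffunE h1 h2 !add0r in E1.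
  apply/ffunP => x; have := congr1 (fun f : {ffun _ -> int} => f x) E.
  by rewrite /= /shiftm !ffunE E1 => /addIr.
- move=> m [W h2]; exists (shiftm m (- m v1)).
    split; first by apply/weyl_shift.
    by rewrite /shiftm ffunE subrr.
  apply/ffunP => x; rewrite /shiftm !ffunE h2 add0r opprK.
  by rewrite subrK.
Qed.
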